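(* Let $\triangle$ be an apexed triangle with apex $a$, bottom side $bc$ and definer $s$, and let $x\in \mathsf{rCell}(\triangle)$. Let $y$ be the point where the ray from $a$ through $x$ meets the bottom side $bc$. Then the line segment $xy$ is contained in $\mathsf{rCell}(\triangle)$.
   Context: $P$ is a simple polygon, $S$ a finite set of points in $P$ with $|S|\ge 2$, and $d(x,y)$ the geodesic distance in $P$ (length of the shortest path between $x$ and $y$ contained in $P$). $\mathsf{Cell}(S,s)=\{x\in P: d(x,s)>d(x,s')\ \forall s'\in S\setminus\{s\}\}$. An apexed triangle is a Euclidean triangle $\triangle\subseteq P$ with corners $a,b,c$ such that $a$ (the apex) is a vertex of $P$, $b$ and $c$ lie on a common edge of $P$ (the segment $bc$ is the bottom side), together with a site $s\in S$ (the definer) such that $d(x,s)=\|x-a\|+d(a,s)$ for every $x\in\triangle$, where $\|\cdot\|$ is the Euclidean norm. The refined cell of $\triangle$ is $\mathsf{rCell}(\triangle)=\big(\mathrm{int}(\triangle)\cup (bc\setminus\{b,c\})\big)\cap\mathsf{Cell}(S,s)$. *)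

(* Defs.v *)
From Stdlib Require Import Reals Lra List ClassicalEpsilon.
Import ListNotations.
Open Scope R_scope.

Definition pt := (R * R)%type.

Definition dist (p q : pt) : R :=
  sqrt ((fst p - fst q) ^ 2 + (snd p - snd q) ^ 2).

Definition seg (p q z : pt) : Prop :=
  exists t, 0 <= t <= 1 /\
    z = (fst p + t * (fst q - fst p), snd p + t * (snd q - snd p)).

Definition triangle (a b c z : pt) : Prop :=
  exists u v w, 0 <= u /\ 0 <= v /\ 0 <= w /\ u + v + w = 1 /\
    z = (u * fst a + v * fst b + w * fst c, u * snd a + v * snd b + w * snd c).

Definition non_collinear (a b c : pt) : Prop :=
  (fst b - fst a) * (snd c - snd a) - (snd b - snd a) * (fst c - fst a) <> 0.

Definition interior (A : pt -> Prop) (z : pt) : Prop :=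
  exists eps, 0 < eps /\ forall w, dist z w < eps -> A w.

Definition vtx (V : list pt) (i : nat) : pt := nth (i mod length V) V (0, 0).

Definition edge (V : list pt) (i : nat) (z : pt) : Prop :=
  seg (vtx V i) (vtx V (S i)) z.

Definition on_boundary (V : list pt) (z : pt) : Prop :=
  exists i, (i < length V)%nat /\ edge V i z.

Definition simple_polygon (V : list pt) : Prop :=
  (3 <= length V)%nat /\ NoDup V /\
  forall i j z, (i < length V)%nat -> (j < length V)%nat -> i <> j ->
    edge V i z -> edge V j z ->
    (j = (S i) mod length V /\ z = vtx V j) \/
    (i = (S j) mod length V /\ z = vtx V i).

Fixpoint chain_in (A : pt -> Prop) (x : pt) (l : list pt) : Prop :=
  match l with
  | [] => True
  | p :: l' => (forall z, seg x p z -> A z) /\ chain_in A p l'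
  end.

Fixpoint chain_len (x : pt) (l : list pt) : R :=
  match l with
  | [] => 0
  | p :: l' => dist x p + chain_len p l'
  end.

Definition poly_path (A : pt -> Prop) (x y : pt) (l : list pt) : Prop :=
  chain_in A x l /\ last l x = y.

(* z lies in the unbounded component of the complement of the boundary *)
Definition outside (V : list pt) (z : pt) : Prop :=
  ~ on_boundary V z /\
  forall M, exists q l, M < dist (0, 0) q /\
    poly_path (fun w => ~ on_boundary V w) z q l.

(* the closed region P bounded by the polygon *)
Definition region (V : list pt) (z : pt) : Prop := ~ outside V z.

Definition is_inf (A : R -> Prop) (r : R) : Prop :=
  (forall l, A l -> r <= l) /\ (forall r', (forall l, A l -> r' <= l) -> r' <= r).

(* geodesic distance in P: infimum of lengths of paths in P
   (shortest paths in a simple polygon are polygonal) *)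
Definition gdist (V : list pt) (x y : pt) : R :=
  epsilon (inhabits 0)
    (is_inf (fun L => exists l, poly_path (region V) x y l /\ L = chain_len x l)).

Definition Cell (V : list pt) (Sites : list pt) (s x : pt) : Prop :=
  region V x /\
  forall s', In s' Sites -> s' <> s -> gdist V x s > gdist V x s'.

Definition apexed_triangle (V : list pt) (Sites : list pt) (a b c s : pt) : Prop :=
  non_collinear a b c /\
  (forall z, triangle a b c z -> region V z) /\
  In a V /\
  (exists i, (i < length V)%nat /\ edge V i b /\ edge V i c) /\
  In s Sites /\
  (forall x, triangle a b c x -> gdist V x s = dist x a + gdist V a s).

Definition rCell (V : list pt) (Sites : list pt) (a b c s x : pt) : Prop :=
  (interior (triangle a b c) x \/ (seg b c x /\ x <> b /\ x <> c)) /\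
  Cell V Sites s x.

(* Main.v *)
Require Import Defs.
From Stdlib Require Import Reals List.
From Stdlib Require Import Lra Psatz ClassicalEpsilon FunctionalExtensionality PropExtensionality Classical.
Import Defs.
Open Scope R_scope.

Lemma dist_scale (p q : pt) (k e1 e2 : R) : 0 <= k ->
  fst p - fst q = k * e1 -> snd p - snd q = k * e2 ->
  Defs.dist p q = k * sqrt (e1^2 + e2^2).
Proof.
  intros Hk H1 H2. unfold Defs.dist. rewrite H1, H2.
  replace ((k*e1)^2 + (k*e2)^2) with (k^2 * (e1^2+e2^2)) by ring.
  rewrite sqrt_mult_alt by nra. rewrite sqrt_pow2 by lra. reflexivity.
Qed.

Lemma dist_refl p : Defs.dist p p = 0.
Proof. unfold Defs.dist. replace ((fst p - fst p) ^ 2 + (snd p - snd p) ^ 2) with 0 by ring. apply sqrt_0. Qed.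

Lemma dist_nonneg p q : 0 <= Defs.dist p q.
Proof. unfold Defs.dist; apply sqrt_pos. Qed.

Lemma tri_rep a b c p : triangle a b c p -> exists v w, 0 <= v /\ 0 <= w /\ v + w <= 1 /\
  fst p = fst a + v * (fst b - fst a) + w * (fst c - fst a) /\
  snd p = snd a + v * (snd b - snd a) + w * (snd c - snd a).
Proof.
  intros [u [v [w [Hu [Hv [Hw [Hs Hp]]]]]]]. exists v, w.
  rewrite Hp; simpl. repeat split; try lra.
  - replace u with (1 - v - w) by lra. ring.
  - replace u with (1 - v - w) by lra. ring.
Qed.

Lemma rep_tri a b c p v w : 0 <= v -> 0 <= w -> v + w <= 1 ->
  fst p = fst a + v * (fst b - fst a) + w * (fst c - fst a) ->
  snd p = snd a + v * (snd b - snd a) + w * (snd c - snd a) -> triangle a b c p.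
Proof.
  intros Hv Hw Hs H1 H2. exists (1 - v - w), v, w. repeat split; try lra.
  destruct p as [p1 p2]; simpl in *. rewrite H1, H2. f_equal; ring.
Qed.

Lemma tri_convex a b c p q m w : triangle a b c p -> triangle a b c q -> 0 <= m <= 1 ->
  fst w = (1-m) * fst p + m * fst q -> snd w = (1-m) * snd p + m * snd q ->
  triangle a b c w.
Proof.
  intros Hp Hq Hm H1 H2.
  destruct (tri_rep _ _ _ _ Hp) as [v [w' [? [? [? [P1 P2]]]]]].
  destruct (tri_rep _ _ _ _ Hq) as [v2 [w2 [? [? [? [Q1 Q2]]]]]].
  apply (rep_tri a b c w ((1-m)*v + m*v2) ((1-m)*w' + m*w2)); try nra.
Qed.

Lemma seg_tri a b c p q w : triangle a b c p -> triangle a b c q -> seg p q w -> triangle a b c w.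
Proof.
  intros Hp Hq [m [Hm Hw]]. apply (tri_convex a b c p q m w Hp Hq Hm); rewrite Hw; simpl; ring.
Qed.

Lemma bary_unique a b c p q p' q' : non_collinear a b c ->
  p * (fst b - fst a) + q * (fst c - fst a) = p' * (fst b - fst a) + q' * (fst c - fst a) ->
  p * (snd b - snd a) + q * (snd c - snd a) = p' * (snd b - snd a) + q' * (snd c - snd a) ->
  p = p' /\ q = q'.
Proof.
  unfold non_collinear. intros D e1 e2.
  set (B1 := fst b - fst a) in *. set (B2 := snd b - snd a) in *.
  set (C1 := fst c - fst a) in *. set (C2 := snd c - snd a) in *.
  assert (E1 : (p - p') * (B1 * C2 - B2 * C1) = 0).
  { replace ((p - p') * (B1 * C2 - B2 * C1)) with
      (C2 * (p*B1 + q*C1 - (p'*B1 + q'*C1)) - C1 * (p*B2 + q*C2 - (p'*B2+q'*C2))) by ring.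
    rewrite e1, e2; ring. }
  assert (E2 : (q - q') * (B1 * C2 - B2 * C1) = 0).
  { replace ((q - q') * (B1 * C2 - B2 * C1)) with
      (B1 * (p*B2 + q*C2 - (p'*B2+q'*C2)) - B2 * (p*B1 + q*C1 - (p'*B1 + q'*C1))) by ring.
    rewrite e1, e2; ring. }
  apply Rmult_integral in E1; apply Rmult_integral in E2. split.
  - destruct E1; [lra | contradiction].
  - destruct E2; [lra | contradiction].
Qed.

Lemma perturb a b c x d1 d2 : interior (triangle a b c) x ->
  exists del, 0 < del /\ triangle a b c (fst x - del * d1, snd x - del * d2).
Proof.
  intros [eps [He H]].
  set (S := sqrt (d1^2 + d2^2)).
  assert (HS : 0 <= S) by apply sqrt_pos.
  set (del := eps / (2*S+1)).
  assert (Hd : del * (2*S+1) = eps) by (unfold del; field; lra).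
  assert (Hdp : 0 < del) by (unfold del; apply Rdiv_lt_0_compat; lra).
  exists del; split; auto. apply H.
  rewrite (dist_scale _ _ del d1 d2); [ | lra | simpl; ring | simpl; ring].
  fold S. nra.
Qed.
Lemma inf_exists (A : R -> Prop) : (exists L, A L) -> (forall L, A L -> 0 <= L) ->
  is_inf A (epsilon (inhabits 0) (is_inf A)).
Proof.
  intros [L0 HL0] Hpos. apply epsilon_spec.
  set (E := fun r => A (- r)).
  assert (Hb : bound E).
  { exists 0. intros r Hr. unfold E in Hr. apply Hpos in Hr. lra. }
  assert (He : exists r, E r). { exists (- L0). unfold E. rewrite Ropp_involutive. auto. }
  destruct (completeness E Hb He) as [m [Hub Hlub]].
  exists (- m). split.
  - intros l Hl. assert (E (- l)) by (unfold E; rewrite Ropp_involutive; auto).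
    apply Hub in H. lra.
  - intros r' Hr'. assert (m <= - r'). { apply Hlub. intros r Hr. apply Hr' in Hr. lra. } lra.
Qed.

Lemma eps_ext (A1 A2 : R -> Prop) : (forall L, A1 L <-> A2 L) ->
  epsilon (inhabits 0) (is_inf A1) = epsilon (inhabits 0) (is_inf A2).
Proof.
  intros H. assert (A1 = A2).
  { apply functional_extensionality. intro L. apply propositional_extensionality. apply H. }
  subst. reflexivity.
Qed.

Lemma chain_len_nonneg x l : 0 <= chain_len x l.
Proof.
  revert x; induction l as [|p l IH]; intros x; simpl; [lra|].
  pose proof (dist_nonneg x p). pose proof (IH p). lra.
Qed.

Lemma last_default (l : list pt) p d d' : last (p :: l) d = last (p :: l) d'.
Proof.
  revert p; induction l as [|q l IH]; intros p; [reflexivity|]. exact (IH q).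
Qed.

Lemma last_cons (l : list pt) x z : last (x :: l) z = last l x.
Proof.
  destruct l as [|p l]; [reflexivity|]. exact (last_default l p z x).
Qed.

Definition Aset V x s' := fun L => exists l, poly_path (region V) x s' l /\ L = chain_len x l.

Lemma Aset_prefix V x z s' L : Aset V x s' L -> (forall q, seg z x q -> region V q) ->
  Aset V z s' (Defs.dist z x + L).
Proof.
  intros [l [[Hc Hl] HL]] Hs. exists (x :: l). split.
  - split; [split; auto | rewrite last_cons; auto].
  - simpl. rewrite HL. reflexivity.
Qed.

Lemma gdist_eq V x s' : gdist V x s' = epsilon (inhabits 0) (is_inf (Aset V x s')).
Proof. reflexivity. Qed.
Lemma tri_b a b c : triangle a b c b.
Proof. apply (rep_tri a b c b 1 0); try lra; ring. Qed.
Lemma tri_c a b c : triangle a b c c.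
Proof. apply (rep_tri a b c c 0 1); try lra; ring. Qed.

Theorem mainTheorem7 (V Sites : list pt) (a b c s x y : pt) :
  simple_polygon V ->
  NoDup Sites -> (2 <= length Sites)%nat ->
  (forall p, In p Sites -> region V p) ->
  apexed_triangle V Sites a b c s ->
  rCell V Sites a b c s x ->
  seg b c y ->
  (exists t, 0 <= t /\ y = (fst a + t * (fst x - fst a), snd a + t * (snd x - snd a))) ->
  forall z, seg x y z -> rCell V Sites a b c s z.
Proof.
  intros Hsp Hnd Hlen Hreg [Hnc [Htri [HaV [Hedge [HsS Hgd]]]]] [Hxc [HxR HxC]] Hyseg
    [t [Ht Hyr]] z Hz.
  assert (Hxt : triangle a b c x).
  { destruct Hxc as [[eps [He Hb]] | [Hs _]].
    - apply Hb. rewrite dist_refl. lra.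
    - exact (seg_tri _ _ _ _ _ _ (tri_b a b c) (tri_c a b c) Hs). }
  assert (Hyt : triangle a b c y) by exact (seg_tri _ _ _ _ _ _ (tri_b a b c) (tri_c a b c) Hyseg).
  destruct (tri_rep _ _ _ _ Hxt) as [v [w [Hv [Hw [Hvw [X1 X2]]]]]].
  pose proof Hyseg as Hyseg'.
  destruct Hyseg' as [k [Hk Hyk]].
  assert (Y1 : fst y = fst b + k * (fst c - fst b)) by (rewrite Hyk; reflexivity).
  assert (Y2 : snd y = snd b + k * (snd c - snd b)) by (rewrite Hyk; reflexivity).
  assert (R1 : fst y = fst a + t * (fst x - fst a)) by (rewrite Hyr; reflexivity).
  assert (R2 : snd y = snd a + t * (snd x - snd a)) by (rewrite Hyr; reflexivity).
  destruct Hz as [r [Hr Hzr]].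
  assert (Z1 : fst z = fst x + r * (fst y - fst x)) by (rewrite Hzr; reflexivity).
  assert (Z2 : snd z = snd x + r * (snd y - snd x)) by (rewrite Hzr; reflexivity).
  assert (U : 1 - k = t * v /\ k = t * w).
  { apply (bary_unique a b c); auto.
    - transitivity (fst y - fst a); [rewrite Y1; ring | rewrite R1, X1; ring].
    - transitivity (snd y - snd a); [rewrite Y2; ring | rewrite R2, X2; ring]. }
  destruct U as [U1 U2].
  assert (Htvw : t * (v + w) = 1) by lra.
  assert (Hvwp : 0 < v + w) by nra.
  assert (Ht1 : 1 <= t) by nra.
  set (lam := 1 + r * (t - 1)).
  assert (Hlam : 1 <= lam) by (unfold lam; nra).
  assert (ZA1 : fst z - fst a = lam * (fst x - fst a)) by (rewrite Z1, R1; unfold lam; ring).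
  assert (ZA2 : snd z - snd a = lam * (snd x - snd a)) by (rewrite Z2, R2; unfold lam; ring).
  assert (Htz : triangle a b c z).
  { apply (rep_tri a b c z (lam * v) (lam * w)).
    - nra.
    - nra.
    - assert (lam * (v + w) = v + w + r * (1 - (v + w))) by (unfold lam; nra). nra.
    - replace (fst z) with (fst a + lam * (fst x - fst a)) by lra. rewrite X1; ring.
    - replace (snd z) with (snd a + lam * (snd x - snd a)) by lra. rewrite X2; ring. }
  assert (HzC : Cell V Sites s z).
  { split; [apply Htri; auto|].
    intros s' Hs' Hne. specialize (HxC s' Hs' Hne).
    set (N := sqrt ((fst x - fst a)^2 + (snd x - snd a)^2)).
    assert (HN : 0 <= N) by apply sqrt_pos.
    assert (dza : Defs.dist z a = lam * N) by (apply dist_scale; lra).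
    assert (dxa : Defs.dist x a = 1 * N) by (apply dist_scale; lra).
    assert (dzx : Defs.dist z x = (lam - 1) * N) by (apply dist_scale; lra).
    rewrite (Hgd z Htz). rewrite (Hgd x Hxt) in HxC.
    assert (Hzx : forall q, seg z x q -> region V q)
      by (intros q Hq; apply Htri; exact (seg_tri _ _ _ _ _ _ Htz Hxt Hq)).
    assert (Hxz : forall q, seg x z q -> region V q)
      by (intros q Hq; apply Htri; exact (seg_tri _ _ _ _ _ _ Hxt Htz Hq)).
    assert (Hpos : forall p L, Aset V p s' L -> 0 <= L)
      by (intros p L [l [_ ->]]; apply chain_len_nonneg).
    destruct (classic (exists L, Aset V x s' L)) as [Hex | Hnex].
    - pose proof (inf_exists _ Hex (Hpos x)) as Ix.
      destruct Hex as [L0 HL0].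
      assert (Hez : exists L, Aset V z s' L) by (exists (Defs.dist z x + L0); apply Aset_prefix; auto).
      pose proof (inf_exists _ Hez (Hpos z)) as Iz.
      rewrite <- gdist_eq in Ix, Iz.
      destruct Ix as [Ix1 Ix2]. destruct Iz as [Iz1 Iz2].
      assert (gdist V z s' - Defs.dist z x <= gdist V x s').
      { apply Ix2. intros l Hl. pose proof (Iz1 _ (Aset_prefix _ _ _ _ _ Hl Hzx)). lra. }
      nra.
    - assert (Hnz : ~ exists L, Aset V z s' L).
      { intros [L HL]. apply Hnex. exists (Defs.dist x z + L). apply Aset_prefix; auto. }
      assert (E : gdist V x s' = gdist V z s').
      { rewrite !gdist_eq. apply eps_ext. intros L; split; intros HL.
        - exfalso; apply Hnex; eauto.
        - exfalso; apply Hnz; eauto. }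
      rewrite <- E. nra. }
  split; [|exact HzC].
  destruct Hxc as [Hi | [Hxs [Hnb Hnc']]].
  -
    assert (Hwp : 0 < w).
    { destruct (perturb a b c x (fst c - fst a) (snd c - snd a) Hi) as [del [Hdel Hp]].
      destruct (tri_rep _ _ _ _ Hp) as [v' [w' [? [? [? [P1 P2]]]]]]. simpl in P1, P2.
      destruct (bary_unique a b c v' w' v (w - del)) as [_ E]; auto; [nra | nra | nra]. }
    assert (Hvp : 0 < v).
    { destruct (perturb a b c x (fst b - fst a) (snd b - snd a) Hi) as [del [Hdel Hp]].
      destruct (tri_rep _ _ _ _ Hp) as [v' [w' [? [? [? [P1 P2]]]]]]. simpl in P1, P2.
      destruct (bary_unique a b c v' w' (v - del) w) as [E _]; auto; [nra | nra | nra]. }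
    destruct (Rle_lt_or_eq_dec r 1 (proj2 Hr)) as [Hr1 | Hr1].
    + left. destruct Hi as [eps [He Hball]]. exists ((1 - r) * eps). split; [nra|].
      intros q Hq.
      set (q' := (fst x + (fst q - fst z) / (1 - r), snd x + (snd q - snd z) / (1 - r))).
      assert (Hq' : triangle a b c q').
      { apply Hball.
        rewrite (dist_scale x q' (1 / (1 - r)) (fst z - fst q) (snd z - snd q)).
        - change (1 / (1 - r) * Defs.dist z q < eps).
          replace (1 / (1 - r) * Defs.dist z q) with (Defs.dist z q / (1 - r)) by (field; lra).
          unfold Rdiv. apply (Rmult_lt_reg_l (1 - r)); [lra|].
          replace ((1 - r) * (Defs.dist z q * / (1 - r))) with (Defs.dist z q) by (field; lra).
          lra.
        - apply Rlt_le, Rdiv_lt_0_compat; lra.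
        - simpl. field. lra.
        - simpl. field. lra. }
      apply (tri_convex a b c q' y r q Hq' Hyt); [lra | | ]; simpl.
      * rewrite Z1. field. lra.
      * rewrite Z2. field. lra.
    + right. subst r.
      assert (zy : z = y).
      { apply injective_projections; [rewrite Z1 | rewrite Z2]; ring. }
      rewrite zy. split; [exact Hyseg|]. split.
      * intros yb.
        destruct (bary_unique a b c (1 - k) k 1 0) as [_ E]; auto.
        -- transitivity (fst y - fst a); [rewrite Y1; ring | rewrite yb; ring].
        -- transitivity (snd y - snd a); [rewrite Y2; ring | rewrite yb; ring].
        -- nra.
      * intros yc.
        destruct (bary_unique a b c (1 - k) k 0 1) as [E _]; auto.
        -- transitivity (fst y - fst a); [rewrite Y1; ring | rewrite yc; ring].
        -- transitivity (snd y - snd a); [rewrite Y2; ring | rewrite yc; ring].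
        -- nra.
  -
    destruct Hxs as [k' [Hk' Hxk]].
    assert (XB1 : fst x = fst b + k' * (fst c - fst b)) by (rewrite Hxk; reflexivity).
    assert (XB2 : snd x = snd b + k' * (snd c - snd b)) by (rewrite Hxk; reflexivity).
    destruct (bary_unique a b c v w (1 - k') k') as [E1 E2]; auto.
    + transitivity (fst x - fst a); [rewrite X1; ring | rewrite XB1; ring].
    + transitivity (snd x - snd a); [rewrite X2; ring | rewrite XB2; ring].
    + assert (t = 1) by nra.
      assert (Hl1 : lam = 1) by (unfold lam; subst t; ring).
      assert (zx : z = x).
      { apply injective_projections; nra. }
      rewrite zx. right. split; [|split]; auto. exists k'. auto.
Qed.
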